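(* Let $p$ be a prime and $k$ a field of characteristic $p$. Then $R_1^{(p)}\neq L_1$.
   Context: $X=\{x_1,x_2,\ldots\}$ is a countably infinite set and $k_0\langle X\rangle$ is the free associative $k$-algebra (without identity) on $X$. A $T$-space is a $k$-linear subspace closed under every algebra endomorphism of $k_0\langle X\rangle$; the $T$-space generated by a subset is the smallest $T$-space containing it. $S_p(v_1,\ldots,v_p)=\sum_{\sigma\in\Sigma_p}\prod_{i=1}^p v_{\sigma(i)}$; $R_1^{(p)}$ is the $T$-space generated by $S_p(x_1,\ldots,x_p)$, and $L_1$ is the $T$-space generated by $x_1^p$. *)

(* Defs.v *)
From HB Require Import structures.
From mathcomp Require Import all_boot all_order all_fingroup all_algebra.
Set Implicit Arguments. Unset Strict Implicit. Unset Printing Implicit Defensive.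
Import Order.TTheory GRing.Theory Num.Theory.
Local Open Scope ring_scope.

Section FreeAlg.
Variable k : fieldType.

(* An element of k_0<X> is given by its coefficient function on words
   (words = seq nat, letter i standing for x_i), with finite support and
   zero coefficient on the empty word (no identity). *)
Record fa := FA {
  coef : seq nat -> k;
  coef_nil : coef [::] = 0;
  coef_fin : exists s : seq (seq nat), forall w, w \notin s -> coef w = 0 }.

Lemma fa_zero_fin : exists s : seq (seq nat), forall w : seq nat, w \notin s -> (0 : k) = 0.
Proof. by exists [::]. Qed.
Definition fa_zero : fa := @FA (fun _ => 0) erefl fa_zero_fin.

Lemma fa_add_nil (f g : fa) : coef f [::] + coef g [::] = 0.
Proof. by rewrite !coef_nil addr0. Qed.
Lemma fa_add_fin (f g : fa) : exists s : seq (seq nat),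
  forall w, w \notin s -> coef f w + coef g w = 0.
Proof.
case: (coef_fin f) => sf Hf; case: (coef_fin g) => sg Hg.
exists (sf ++ sg) => w; rewrite mem_cat negb_or => /andP[hf hg].
by rewrite Hf // Hg // addr0.
Qed.
Definition fa_add (f g : fa) : fa :=
  @FA (fun w => coef f w + coef g w) (fa_add_nil f g) (fa_add_fin f g).

Lemma fa_scale_nil (a : k) (f : fa) : a * coef f [::] = 0.
Proof. by rewrite coef_nil mulr0. Qed.
Lemma fa_scale_fin (a : k) (f : fa) : exists s : seq (seq nat),
  forall w, w \notin s -> a * coef f w = 0.
Proof. case: (coef_fin f) => sf Hf; exists sf => w hw; by rewrite Hf // mulr0. Qed.
Definition fa_scale (a : k) (f : fa) : fa :=
  @FA (fun w => a * coef f w) (fa_scale_nil a f) (fa_scale_fin a f).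

Definition mul_coef (f g : fa) (w : seq nat) : k :=
  \sum_(i < (size w).+1) coef f (take i w) * coef g (drop i w).
Lemma fa_mul_nil (f g : fa) : mul_coef f g [::] = 0.
Proof. by rewrite /mul_coef big_ord1 /= coef_nil mul0r. Qed.
Lemma fa_mul_fin (f g : fa) : exists s : seq (seq nat),
  forall w, w \notin s -> mul_coef f g w = 0.
Proof.
case: (coef_fin f) => sf Hf; case: (coef_fin g) => sg Hg.
exists [seq u ++ v | u <- sf, v <- sg] => w hw.
apply: big1 => i _.
case: (boolP (take i w \in sf)) => hu; last by rewrite Hf // mul0r.
case: (boolP (drop i w \in sg)) => hv; last by rewrite Hg // mulr0.
by move: hw; rewrite -{1}(cat_take_drop i w) allpairs_f.
Qed.
Definition fa_mul (f g : fa) : fa :=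
  @FA (mul_coef f g) (fa_mul_nil f g) (fa_mul_fin f g).

Lemma fa_var_nil (i : nat) : (([::] : seq nat) == [:: i])%:R = 0 :> k.
Proof. by []. Qed.
Lemma fa_var_fin (i : nat) : exists s : seq (seq nat),
  forall w, w \notin s -> (w == [:: i])%:R = 0 :> k.
Proof. by exists [:: [:: i]] => w; rewrite inE => /negbTE ->. Qed.
Definition fa_var (i : nat) : fa :=
  @FA (fun w => (w == [:: i])%:R) (fa_var_nil i) (fa_var_fin i).

Definition fa_sum (l : seq fa) : fa := foldr fa_add fa_zero l.
Definition fa_prod (l : seq fa) : fa :=
  if l is a :: l' then foldl fa_mul a l' else fa_zero.

Definition is_alg_endo (phi : fa -> fa) : Prop :=
  (forall (a : k) (f g : fa), phi (fa_add (fa_scale a f) g) =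
                              fa_add (fa_scale a (phi f)) (phi g)) /\
  (forall f g : fa, phi (fa_mul f g) = fa_mul (phi f) (phi g)).

Definition is_tspace (V : fa -> Prop) : Prop :=
  [/\ V fa_zero,
      (forall f g, V f -> V g -> V (fa_add f g)),
      (forall a f, V f -> V (fa_scale a f)) &
      (forall phi, is_alg_endo phi -> forall f, V f -> V (phi f))].

Definition tspace_gen (S : fa -> Prop) : fa -> Prop :=
  fun f => forall V, is_tspace V -> (forall g, S g -> V g) -> V f.

Definition Sp (p : nat) : fa :=
  fa_sum [seq fa_prod [seq fa_var (s i).+1 | i <- enum 'I_p] | s : 'S_p <- enum 'S_p].

Definition x1_pow (p : nat) : fa := fa_prod (nseq p (fa_var 1)).

Definition R1 (p : nat) : fa -> Prop := tspace_gen (fun f => f = Sp p).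
Definition L1 (p : nat) : fa -> Prop := tspace_gen (fun f => f = x1_pow p).

End FreeAlg.

(* Main.v *)
Require Import Defs.
From mathcomp Require Import all_boot all_order all_fingroup all_algebra.
From Stdlib Require Import ClassicalEpsilon FunctionalExtensionality ProofIrrelevance.
Local Open Scope ring_scope.
Import GRing.Theory.

Section Aux.
Variable k : fieldType.

Lemma fa_eq (f g : fa k) : (forall w, coef f w = coef g w) -> f = g.
Proof.
case: f g => cf nf ff [cg ng fg] /= H.
have E := functional_extensionality _ _ H. subst cg.
by rewrite (proof_irrelevance _ nf ng) (proof_irrelevance _ ff fg).
Qed.

Definition supp (f : fa k) : seq (seq nat) :=
  proj1_sig (constructive_indefinite_description _ (coef_fin f)).
Lemma suppP f w : w \notin supp f -> coef f w = 0.
Proof. rewrite /supp; destruct (constructive_indefinite_description _ (coef_fin f)) as [s hs]; exact: hs. Qed.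

Definition bnd f := (\max_(w <- supp f) size w).+1.
Lemma bndP f n : (bnd f <= n)%N -> coef f (nseq n 1%N) = 0.
Proof.
move=> hn; apply: suppP; apply/negP => hin.
have := @leq_bigmax_seq _ (supp f) xpredT size _ hin isT.
rewrite size_nseq => h; move: hn; rewrite /bnd; apply/negP; rewrite -ltnNge ltnS //.
Qed.

Definition Pf f : {poly k} := \poly_(n < bnd f) coef f (nseq n 1%N).
Lemma coefPf f n : (Pf f)`_n = coef f (nseq n 1%N).
Proof. by rewrite coef_poly; case: ltnP => // h; rewrite bndP. Qed.

Definition psi0 f := (Pf f).[1].

Definition is_hom (psi : fa k -> k) :=
  (forall a f g, psi (fa_add (fa_scale a f) g) = a * psi f + psi g) /\
  (forall f g, psi (fa_mul f g) = psi f * psi g).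

Lemma psi0_hom : is_hom psi0.
Proof.
split.
  move=> a f g; rewrite /psi0.
  have -> : Pf (fa_add (fa_scale a f) g) = a *: Pf f + Pf g.
    by apply/polyP => n; rewrite coefD coefZ !coefPf.
  by rewrite hornerD hornerZ.
move=> f g; rewrite /psi0.
have -> : Pf (fa_mul f g) = Pf f * Pf g.
  apply/polyP => n; rewrite coefM coefPf /= /mul_coef size_nseq.
  apply: eq_bigr => i _; rewrite !coefPf take_nseq ?drop_nseq //.
  by rewrite -ltnS.
by rewrite hornerM.
Qed.

Lemma hom0 psi : is_hom psi -> psi (fa_zero k) = 0.
Proof.
case=> hl _.
have E : fa_add (fa_scale (-1) (fa_zero k)) (fa_zero k) = fa_zero k.
  by apply: fa_eq => w /=; rewrite mulr0 addr0.
have := hl (-1) (fa_zero k) (fa_zero k); rewrite E mulN1r addNr //.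
Qed.

Lemma homD psi f g : is_hom psi -> psi (fa_add f g) = psi f + psi g.
Proof.
move=> h; have E : fa_add f g = fa_add (fa_scale 1 f) g.
  by apply: fa_eq => w /=; rewrite mul1r.
by rewrite E h.1 mul1r.
Qed.

Lemma homZ psi a f : is_hom psi -> psi (fa_scale a f) = a * psi f.
Proof.
move=> h; have E : fa_scale a f = fa_add (fa_scale a f) (fa_zero k).
  by apply: fa_eq => w /=; rewrite addr0.
by rewrite E h.1 hom0 // addr0.
Qed.

Lemma hom_sum psi l : is_hom psi -> psi (fa_sum l) = \sum_(x <- l) psi x.
Proof.
move=> h; elim: l => [|a l IH]; first by rewrite big_nil hom0.
by rewrite big_cons /= homD // IH.
Qed.

Lemma hom_prod psi a l : is_hom psi ->
  psi (fa_prod (a :: l)) = \prod_(x <- a :: l) psi x.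
Proof.
move=> h; rewrite big_cons /=; elim: l a => [|b l IH] a; first by rewrite big_nil mulr1.
by rewrite /= IH h.2 big_cons mulrA.
Qed.

Lemma hom_prod' psi l : is_hom psi -> (0 < size l)%N ->
  psi (fa_prod l) = \prod_(x <- l) psi x.
Proof. by case: l => // a l h _; rewrite hom_prod. Qed.
End Aux.
Arguments hom_prod' {k}.
Arguments psi0 {k}.
Arguments Pf {k}.
Arguments is_hom {k}.
Arguments hom0 {k}.
Arguments homD {k}.
Arguments homZ {k}.
Arguments hom_sum {k}.
Arguments hom_prod {k}.

Theorem proposition5p1 (p : nat) (k : fieldType) (hp : prime p)
    (hk : p \in [pchar k]) :
  ~ (forall f : fa k, R1 p f <-> L1 p f).
Proof.
move=> H.
have hL : L1 p (x1_pow k p) by move=> V _ hS; apply: hS.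
have hR := (H _).2 hL.
pose V := fun f : fa k => forall psi, is_hom psi -> psi f = 0.
have tV : is_tspace V.
  split.
  - by move=> psi h; rewrite hom0.
  - by move=> f g hf hg psi h; rewrite homD // hf // hg // addr0.
  - by move=> a f hf psi h; rewrite homZ // hf // mulr0.
  - move=> phi [phl phm] f hf psi [hl hm]; apply: (hf (fun x => psi (phi x))).
    split; first by move=> a f' g; rewrite phl hl.
    by move=> f' g; rewrite phm hm.
have p0 : (p`!)%:R = 0 :> k.
  have /andP[_ /eqP hp0] := hk.
  by rewrite -(prednK (prime_gt0 hp)) factS natrM prednK ?prime_gt0 // hp0 mul0r.
have hS : V (Sp k p).
  move=> psi h; rewrite /Sp hom_sum // big_map.
  pose C := \prod_(i < p) psi (fa_var k i.+1).
  have -> : \sum_(s <- enum 'S_p) psi (fa_prod [seq fa_var k (s i).+1 | i <- enum 'I_p])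
          = \sum_(s <- enum 'S_p) C.
    apply: eq_bigr => s _.
    rewrite hom_prod' //; last by rewrite size_map size_enum_ord prime_gt0.
    rewrite big_map big_enum /=.
    rewrite /C [RHS](reindex_inj (@perm_inj _ s)) /=.
    by apply: eq_bigl => i; rewrite inE.
  by rewrite big_enum /= sumr_const card_Sn -mulr_natr p0 mulr0.
have := hR V tV (fun g e => ltac:(by rewrite e)) _ (@psi0_hom k).
rewrite /x1_pow -(prednK (prime_gt0 hp)) /= -/(fa_prod (fa_var k 1 :: _)).
rewrite hom_prod; last exact: psi0_hom.
have h1 : psi0 (fa_var k 1) = 1.
  rewrite /psi0.
  have -> : Pf (fa_var k 1) = 'X.
    apply/polyP => n; rewrite coefPf coefX /=.
    by case: n => [|[|n]].
  by rewrite hornerX.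
rewrite big_cons big_nseq h1 mul1r.
have -> : forall n, iter n ( *%R 1) (1 : k) = 1.
  by elim=> //= n ->; rewrite mul1r.
by move/eqP; rewrite oner_eq0.
Qed.
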